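(* Let $b_i>0$ ($i\ge0$), $a_i>0$ ($i\ge1$) and $c_i\le0$ ($i\ge0$) be real numbers. Put $\mu_0=1$, $\mu_i=\frac{b_0\cdots b_{i-1}}{a_1\cdots a_i}$ ($i\ge1$). Define $$\tilde q_n^{(k)}=\begin{cases}-c_n,&0\le k\le n-2,\\ a_n-c_n,&k=n-1,\end{cases}\qquad \widetilde F_i^{(i)}=1,\quad \widetilde F_n^{(i)}=\frac1{b_n}\sum_{k=i}^{n-1}\tilde q_n^{(k)}\widetilde F_k^{(i)}\ (n>i\ge0),$$ $$h_n=1-\sum_{0\le k\le n-1}\ \sum_{0\le j\le k}\widetilde F_k^{(j)}\frac{c_j}{b_j},\qquad n\ge0,$$ and $$\lambda_0=\inf\Big\{\sum_{k\ge0}\mu_k\big[b_k(f_{k+1}-f_k)^2-c_kf_k^2\big]:\ \sum_{k\ge0}\mu_kf_k^2=1,\ f\text{ finitely supported on }\{0,1,2,\dots\}\Big\}.$$ Let $$\tilde\delta=\sup_{n\ge0}\sum_{j=0}^n\mu_jh_j^2\sum_{k\ge n}\frac1{h_kh_{k+1}\mu_kb_k}.$$ Then $\tilde\delta\le\lambda_0^{-1}\le4\tilde\delta$ (with $1/0=\infty$). In particular, $\lambda_0>0$ if and only if $\tilde\delta<\infty$. *)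

(* Defs.v *)
From Stdlib Require Import Reals Lra Arith ClassicalEpsilon.
Open Scope R_scope.

Inductive ER : Type := Fin (x : R) | PInf.

Definition ER_le (x y : ER) : Prop :=
  match x, y with
  | Fin u, Fin v => u <= v
  | _, PInf => True
  | PInf, Fin _ => False
  end.

Definition ER_scale (r : R) (x : ER) : ER :=
  match x with Fin u => Fin (r * u) | PInf => PInf end.

Definition ER_inv (x : R) : ER := if Req_EM_T x 0 then PInf else Fin (/ x).

Definition ER_is_lub (P : ER -> Prop) (s : ER) : Prop :=
  (forall x, P x -> ER_le x s) /\
  (forall u, (forall x, P x -> ER_le x u) -> ER_le s u).

(* supremum in R ∪ {+oo} (chosen by Hilbert's epsilon; it is the l.u.b.
   whenever one exists, which is the case for every nonempty set) *)
Definition ER_sup (P : ER -> Prop) : ER := epsilon (inhabits PInf) (ER_is_lub P).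

Definition R_is_glb (P : R -> Prop) (l : R) : Prop :=
  (forall x, P x -> l <= x) /\ (forall m, (forall x, P x -> m <= x) -> m <= l).

Definition R_inf (P : R -> Prop) : R := epsilon (inhabits 0) (R_is_glb P).

Fixpoint sumR (f : nat -> R) (n : nat) : R :=
  match n with O => 0 | S m => sumR f m + f m end.

(* sum over k >= n of nonnegative terms t k, valued in [0, +oo] :
   the supremum of the partial sums t n + ... + t (n+N) *)
Definition tail_sum (t : nat -> R) (n : nat) : ER :=
  ER_sup (fun x => exists N : nat, x = Fin (sumR (fun j => t (n + j)%nat) (S N))).

Section Paper.
Variables (a b c : nat -> R).

Fixpoint mu (i : nat) : R :=
  match i with O => 1 | S j => mu j * (b j / a (S j)) end.

Definition qt (n k : nat) : R :=
  if Nat.eqb k (n - 1) then a n - c n else - c n.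

(* Fseq i m j = tilde F_{i+j}^{(i)} for j <= m *)
Fixpoint Fseq (i m : nat) : nat -> R :=
  match m with
  | O => fun j => if Nat.eqb j 0 then 1 else 0
  | S m' => fun j =>
      if Nat.leb j m' then Fseq i m' j
      else / b (i + S m')%nat *
           sumR (fun t => qt (i + S m') (i + t) * Fseq i m' t) (S m')
  end.

(* tilde F_n^{(i)} for n >= i (set to 0 for n < i, never used) *)
Definition Ft (i n : nat) : R :=
  if Nat.ltb n i then 0 else Fseq i (n - i) (n - i).

Definition h (n : nat) : R :=
  1 - sumR (fun k => sumR (fun j => Ft j k * c j / b j) (S k)) n.

Definition Sdelta (n : nat) : ER :=
  ER_scale (sumR (fun j => mu j * (h j)^2) (S n))
           (tail_sum (fun k => / (h k * h (S k) * mu k * b k)) n).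

Definition delta_tilde : ER := ER_sup (fun x => exists n : nat, x = Sdelta n).

(* values of the Dirichlet form on finitely supported f normalised in L^2(mu)
   (f k = 0 for k >= N, so the series are the finite sums over k < N) *)
Definition Dvalues (x : R) : Prop :=
  exists (f : nat -> R) (N : nat),
    (forall k, (N <= k)%nat -> f k = 0) /\
    sumR (fun k => mu k * (f k)^2) N = 1 /\
    x = sumR (fun k => mu k * (b k * (f (S k) - f k)^2 - c k * (f k)^2)) N.

Definition lambda0 : R := R_inf Dvalues.

End Paper.

(* Main.v *)
Require Import Defs.
From Stdlib Require Import Reals Lra Lia Psatz Arith ClassicalEpsilon Classical.
Open Scope R_scope.

Lemma sumR_ext f g n : (forall k, (k < n)%nat -> f k = g k) -> sumR f n = sumR g n.
Proof. induction n; intros H; simpl; auto. rewrite IHn by (intros; apply H; lia). rewrite H by lia. reflexivity. Qed.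

Lemma sumR_plus f g n : sumR (fun k => f k + g k) n = sumR f n + sumR g n.
Proof. induction n; simpl; [lra|]. rewrite IHn; lra. Qed.

Lemma sumR_scal r f n : sumR (fun k => r * f k) n = r * sumR f n.
Proof. induction n; simpl; [lra|]. rewrite IHn; lra. Qed.

Lemma sumR_le f g n : (forall k, (k<n)%nat -> f k <= g k) -> sumR f n <= sumR g n.
Proof. induction n; intros H; simpl; [lra|]. assert (f n <= g n) by (apply H; lia).
  assert (sumR f n <= sumR g n) by (apply IHn; intros; apply H; lia). lra. Qed.

Lemma sumR_nonneg f n : (forall k, (k<n)%nat -> 0 <= f k) -> 0 <= sumR f n.
Proof. intros H. replace 0 with (sumR (fun _ => 0) n). apply sumR_le; auto.
  clear H; induction n; simpl; auto; lra. Qed.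

Lemma sumR_zero f n : (forall k, (k<n)%nat -> f k = 0) -> sumR f n = 0.
Proof. induction n; intros H; simpl; auto. rewrite IHn by (intros; apply H; lia). rewrite H by lia. lra. Qed.

Lemma sumR_split f n m : sumR f (n + m) = sumR f n + sumR (fun i => f (n+i)%nat) m.
Proof. induction m; simpl. rewrite Nat.add_0_r; lra. rewrite Nat.add_succ_r; simpl; rewrite IHm; lra. Qed.

Lemma sumR_front f n : sumR f (S n) = f O + sumR (fun i => f (S i)) n.
Proof. change (S n) with (1 + n)%nat. rewrite sumR_split. simpl. lra. Qed.

Lemma sumR_swap (F : nat -> nat -> R) n m :
  sumR (fun i => sumR (fun j => F i j) m) n = sumR (fun j => sumR (fun i => F i j) n) m.
Proof. induction n; simpl.
  - symmetry; apply sumR_zero; auto.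
  - rewrite IHn. rewrite <- sumR_plus. reflexivity. Qed.

Definition tl (x : nat -> R) (N j : nat) : R := sumR (fun i => x (j + i)%nat) (N - j).

Lemma tl_step x N j : (j < N)%nat -> tl x N j = x j + tl x N (S j).
Proof. intros H. unfold tl. replace (N - j)%nat with (S (N - S j)) by lia.
  rewrite sumR_front. rewrite Nat.add_0_r. f_equal. apply sumR_ext; intros. f_equal; lia. Qed.

Lemma tl_end x N j : (N <= j)%nat -> tl x N j = 0.
Proof. intros H. unfold tl. replace (N - j)%nat with O by lia. reflexivity. Qed.

Lemma tl_nonneg x N j : (forall k, (j <= k)%nat -> 0 <= x k) -> 0 <= tl x N j.
Proof. intros H. unfold tl. apply sumR_nonneg. intros; apply H; lia. Qed.

Lemma abel (a x : nat -> R) N :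
  sumR (fun j => a j * tl x N j) N = sumR (fun k => x k * sumR a (S k)) N.
Proof.
  assert (G : forall n, (n <= N)%nat -> sumR (fun j => a j * tl x N j) n =
     sumR (fun k => x k * sumR a (S k)) n + sumR a n * tl x N n).
  { induction n; intros Hn; simpl. lra.
    rewrite IHn by lia. rewrite (tl_step x N n) by lia. simpl. ring. }
  rewrite G by lia. rewrite tl_end by lia. ring. Qed.

Lemma amgm2 u v z : 0 <= u -> 0 <= v -> z*z <= u*v -> 2*z <= u+v.
Proof. intros Hu Hv Hz. destruct (Rle_dec (2*z) 0) as [Hl|Hl]. lra.
  apply Rnot_le_lt in Hl. apply Rsqr_incr_0_var. unfold Rsqr. pose proof (pow2_ge_0 (u - v)). nra. lra. Qed.

Lemma cs_step A X P d p : 0 <= X -> 0 <= P -> 0 < p -> A^2 <= X * P ->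
  (A + d)^2 <= (d^2/p + X) * (p + P).
Proof. intros HX HP Hp H.
  assert (2*(A*d) <= d^2*P/p + X*p).
  { assert (0 <= d^2) by apply pow2_ge_0.
    assert (0 < /p) by (apply Rinv_0_lt_compat; lra).
    apply amgm2. unfold Rdiv. apply Rmult_le_pos; [apply Rmult_le_pos|]; lra.
    apply Rmult_le_pos; lra. replace (d ^ 2 * P / p * (X * p)) with (d^2 * (X*P)) by (field; lra).
    replace (A*d*(A*d)) with (d^2 * A^2) by ring. apply Rmult_le_compat_l; lra. }
  replace ((d^2/p + X) * (p + P)) with (d^2 + d^2*P/p + X*p + X*P) by (field; lra). nra. Qed.

Lemma hardy (N : nat) (m w g : nat -> R) (delta : R)
  (hm : forall j, 0 < m j) (hw : forall k, 0 < w k) (hgN : g N = 0)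
  (hyp : forall n, (n < N)%nat -> sumR m (S n) * tl w N n <= delta) :
  sumR (fun j => m j * (g j)^2) N <= 4 * delta * sumR (fun k => (g k - g (S k))^2 / w k) N.
Proof.
  destruct (Nat.eq_dec N 0) as [HN|HN]. { subst N. simpl. lra. }
  set (t := tl w N).
  assert (tnn : forall j, 0 <= t j) by (intros; apply tl_nonneg; intros; left; auto).
  assert (tpos : forall j, (j < N)%nat -> 0 < t j).
  { intros j Hj. unfold t. rewrite tl_step by auto. pose proof (hw j).
    pose proof (tl_nonneg w N (S j) (fun k _ => Rlt_le _ _ (hw k))). lra. }
  set (s := fun j => sqrt (t j)).
  assert (spos : forall j, (j < N)%nat -> 0 < s j) by (intros; apply sqrt_lt_R0; auto).
  assert (snn : forall j, 0 <= s j) by (intros; apply sqrt_pos).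
  assert (sN : s N = 0) by (unfold s, t; rewrite tl_end by lia; apply sqrt_0).
  assert (ss : forall j, s j * s j = t j) by (intros; apply sqrt_sqrt; auto).
  set (p := fun j => w j / s j).
  assert (ppos : forall j, (j < N)%nat -> 0 < p j).
  { intros; unfold p. apply Rdiv_lt_0_compat; auto. }
  set (e := fun j => (g j - g (S j))^2 / p j).
  assert (enn : forall j, (j < N)%nat -> 0 <= e j).
  { intros; unfold e. apply Rmult_le_pos. apply pow2_ge_0. left; apply Rinv_0_lt_compat; auto. }
  assert (tlenn : forall j, 0 <= tl e N j).
  { intros j. unfold tl. apply sumR_nonneg. intros. apply enn; lia. }
  assert (tlpnn : forall j, 0 <= tl p N j).
  { intros j. unfold tl. apply sumR_nonneg. intros. left; apply ppos; lia. }
  assert (CS : forall r j, (j + r = N)%nat -> (g j)^2 <= tl e N j * tl p N j).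
  { induction r; intros j Hj.
    - replace j with N by lia. rewrite hgN, !tl_end by lia. lra.
    - rewrite (tl_step e) by lia. rewrite (tl_step p) by lia.
      replace (g j) with (g (S j) + (g j - g (S j))) by ring. unfold e at 1.
      apply cs_step; auto. apply ppos; lia. apply IHr; lia. }
  assert (PB : forall r j, (j + r = N)%nat -> tl p N j <= 2 * s j).
  { induction r; intros j Hj.
    - replace j with N by lia. rewrite tl_end by lia. rewrite sN. lra.
    - rewrite (tl_step p) by lia. assert (IH := IHr (S j) ltac:(lia)).
      assert (Hs := spos j ltac:(lia)).
      assert (Hw : w j = s j * s j - s (S j) * s (S j)).
      { rewrite !ss. unfold t. rewrite (tl_step w N j) by lia. ring. }
      assert (p j <= 2 * s j - 2 * s (S j)).
      { unfold p. apply (Rmult_le_reg_r (s j)); auto.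
        replace (w j / s j * s j) with (w j) by (field; lra). rewrite Hw.
        pose proof (pow2_ge_0 (s j - s (S j))). nra. }
      lra. }
  assert (Hpt : forall j, (j < N)%nat -> m j * (g j)^2 <= (2 * m j * s j) * tl e N j).
  { intros j Hj. assert (H1 := CS (N - j)%nat j ltac:(lia)). assert (H2 := PB (N - j)%nat j ltac:(lia)).
    pose proof (hm j). pose proof (tlenn j).
    assert ((g j)^2 <= tl e N j * (2 * s j)).
    { eapply Rle_trans. apply H1. apply Rmult_le_compat_l; auto. }
    nra. }
  assert (dnn : 0 <= delta).
  { assert (H0 := hyp 0%nat ltac:(lia)). pose proof (tnn 0%nat).
      assert (0 <= sumR m 1) by (apply sumR_nonneg; intros; left; auto).
      fold t in H0. apply Rle_trans with (sumR m 1 * t 0%nat); auto. apply Rmult_le_pos; auto. }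
  assert (SM : forall n, (n < N)%nat -> sqrt (sumR m (S n)) * s n <= sqrt delta).
  { intros n Hn. unfold s. rewrite <- sqrt_mult_alt. apply sqrt_le_1_alt. apply hyp; auto.
    apply sumR_nonneg. intros; left; auto. }
  assert (QB : forall n, (n <= N)%nat -> sumR (fun j => m j * s j) n <= 2 * sqrt delta * sqrt (sumR m n)).
  { induction n; intros Hn; simpl. rewrite sqrt_0. lra.
    assert (IH := IHn ltac:(lia)).
    set (M := sumR m n). assert (HM : 0 <= M) by (apply sumR_nonneg; intros; left; auto).
    set (A := sqrt (M + m n)). set (B := sqrt M).
    assert (HA : A * A = M + m n) by (apply sqrt_sqrt; pose proof (hm n); lra).
    assert (HB : B * B = M) by (apply sqrt_sqrt; auto).
    assert (HB0 : 0 <= B) by apply sqrt_pos.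
    assert (HAB : B <= A) by (apply sqrt_le_1_alt; pose proof (hm n); lra).
    assert (HAs : A * s n <= sqrt delta) by (apply (SM n); lia).
    pose proof (snn n).
    assert (m n * s n <= 2 * sqrt delta * (A - B)).
    { replace (m n) with (A*A - B*B) by lra.
      assert (0 <= A - B) by lra.
      assert (E1 : (A*A - B*B) * s n <= (A - B) * (2*A) * s n).
      { replace ((A*A - B*B) * s n) with ((A - B) * (A + B) * s n) by ring.
        apply Rmult_le_compat_r; auto. apply Rmult_le_compat_l; lra. }
      assert (E2 : (A - B) * (A * s n) <= (A - B) * sqrt delta) by (apply Rmult_le_compat_l; lra).
      lra. }
    fold M in IH. fold B in IH. lra. }
  apply Rle_trans with (sumR (fun j => (2 * m j * s j) * tl e N j) N).
  { apply sumR_le; auto. }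
  rewrite abel. rewrite <- sumR_scal. apply sumR_le. intros k Hk.
  assert (Hsum : sumR (fun j => 2 * m j * s j) (S k) = 2 * sumR (fun j => m j * s j) (S k)).
  { rewrite <- sumR_scal. apply sumR_ext. intros; ring. }
  rewrite Hsum. assert (H1 := QB (S k) Hk). assert (H2 := SM k Hk).
  assert (Hsd : sqrt delta * sqrt delta = delta) by (apply sqrt_sqrt; auto).
  assert (Hek : e k = (g k - g (S k))^2 / w k * s k).
  { unfold e, p. pose proof (spos k Hk). pose proof (hw k). field; repeat split; lra. }
  rewrite Hek. set (D := (g k - g (S k))^2 / w k).
  assert (HD : 0 <= D). { unfold D. apply Rmult_le_pos. apply pow2_ge_0. left; apply Rinv_0_lt_compat; auto. }
  pose proof (snn k). pose proof (sqrt_pos delta). pose proof (sqrt_pos (sumR m (S k))).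
  assert (s k * sumR (fun j => m j * s j) (S k) <= 2 * delta).
  { apply Rle_trans with (s k * (2 * sqrt delta * sqrt (sumR m (S k)))).
    apply Rmult_le_compat_l; auto.
    replace (s k * (2 * sqrt delta * sqrt (sumR m (S k)))) with (2 * sqrt delta * (sqrt (sumR m (S k)) * s k)) by ring.
    replace (2 * delta) with (2 * sqrt delta * sqrt delta) by lra.
    apply Rmult_le_compat_l; lra. }
  replace (4 * delta * D) with (D * (2 * (2 * delta))) by ring.
  replace (D * s k * (2 * sumR (fun j : nat => m j * s j) (S k))) with (D * (2 * (s k * sumR (fun j : nat => m j * s j) (S k)))) by ring.
  apply Rmult_le_compat_l; lra.
Qed.

Lemma Fseq_stable a b c i m j : (j <= m)%nat -> Fseq a b c i m j = Fseq a b c i j j.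
Proof. induction m; intros H.
  - replace j with O by lia. reflexivity.
  - destruct (Nat.eq_dec j (S m)) as [->|Hne]. reflexivity.
    simpl. replace (Nat.leb j m) with true by (symmetry; apply Nat.leb_le; lia).
    apply IHm; lia. Qed.

Lemma Ft_low a b c j k : (k < j)%nat -> Ft a b c j k = 0.
Proof. intros H. unfold Ft. replace (Nat.ltb k j) with true by (symmetry; apply Nat.ltb_lt; lia). reflexivity. Qed.

Lemma Ft_diag a b c i : Ft a b c i i = 1.
Proof. unfold Ft. rewrite Nat.ltb_irrefl. rewrite Nat.sub_diag. reflexivity. Qed.

Lemma Ft_rec a b c i n : (i < n)%nat ->
  Ft a b c i n = / b n * sumR (fun t => qt a c n (i + t) * Ft a b c i (i + t)) (n - i).
Proof. intros H. unfold Ft at 1. replace (Nat.ltb n i) with false by (symmetry; apply Nat.ltb_ge; lia).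
  destruct (n - i)%nat as [|m'] eqn:E. lia.
  cbn [Fseq].
  replace (Nat.leb (S m') m') with false by (symmetry; apply Nat.leb_gt; lia).
  replace (i + S m')%nat with n by lia.
  f_equal. apply sumR_ext. intros t Ht.
  f_equal. rewrite Fseq_stable by lia. unfold Ft.
  replace (Nat.ltb (i + t) i) with false by (symmetry; apply Nat.ltb_ge; lia).
  replace (i + t - i)%nat with t by lia. reflexivity. Qed.

Lemma sumR_S f n : sumR f (S n) = sumR f n + f n.
Proof. reflexivity. Qed.

Lemma Ft_rec_full a b c i n (hb : forall i, 0 < b i) : (i < n)%nat ->
  b n * Ft a b c i n = sumR (fun k => qt a c n k * Ft a b c i k) n.
Proof. intros H. rewrite Ft_rec by auto. pose proof (hb n).
  replace (b n * (/ b n * sumR (fun t : nat => qt a c n (i + t) * Ft a b c i (i + t)) (n - i)))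
   with (sumR (fun t : nat => qt a c n (i + t) * Ft a b c i (i + t)) (n - i)) by (field; lra).
  replace (sumR (fun k : nat => qt a c n k * Ft a b c i k) n) with
    (sumR (fun k : nat => qt a c n k * Ft a b c i k) (i + (n - i))) by (f_equal; lia).
  rewrite sumR_split. rewrite (sumR_zero _ i). lra.
  intros k Hk. rewrite Ft_low by lia. ring. Qed.

Lemma qt_sum a c n (F : nat -> R) : (1 <= n)%nat ->
  sumR (fun k => qt a c n k * F k) n = - c n * sumR F n + a n * F (n - 1)%nat.
Proof. intros H. destruct n as [|n']. lia. rewrite !sumR_S.
  replace (S n' - 1)%nat with n' by lia.
  rewrite (sumR_ext _ (fun k => - c (S n') * F k)).
  rewrite sumR_scal. unfold qt. replace (S n' - 1)%nat with n' by lia. rewrite Nat.eqb_refl. ring.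
  intros k Hk. unfold qt. replace (Nat.eqb k (S n' - 1)) with false. ring.
  symmetry. apply Nat.eqb_neq. lia. Qed.

Lemma h_S a b c n : h a b c (S n) = h a b c n - sumR (fun j => Ft a b c j n * c j / b j) (S n).
Proof. unfold h. rewrite (sumR_S (fun k => sumR (fun j => Ft a b c j k * c j / b j) (S k)) n). ring. Qed.

Lemma h_0 a b c : h a b c 0 = 1.
Proof. unfold h. simpl. ring. Qed.

Lemma harmonic a b c n (hb : forall i, 0 < b i) : (1 <= n)%nat ->
  b n * (h a b c (S n) - h a b c n) = a n * (h a b c n - h a b c (n - 1)) - c n * h a b c n.
Proof. intros Hn. pose proof (hb n) as Hbn.
  set (X := fun j => c j / b j).
  assert (S1 : sumR (fun j => Ft a b c j n * c j / b j) (S n) = sumR (fun j => Ft a b c j n * X j) n + c n / b n).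
  { rewrite sumR_S. rewrite Ft_diag. f_equal. apply sumR_ext; intros jj Hjj; unfold X; pose proof (hb jj); field; lra. field; lra. }
  assert (S2 : b n * sumR (fun j => Ft a b c j n * X j) n =
     - c n * sumR (fun j => sumR (fun k => Ft a b c j k * X j) n) n + a n * sumR (fun j => Ft a b c j (n-1) * X j) n).
  { rewrite <- sumR_scal. rewrite <- sumR_scal. rewrite <- sumR_scal. rewrite <- sumR_plus.
    apply sumR_ext. intros j Hj. rewrite <- Rmult_assoc. rewrite Ft_rec_full by auto.
    rewrite qt_sum by auto.
    replace (sumR (fun k : nat => Ft a b c j k * X j) n) with (sumR (Ft a b c j) n * X j).
    ring. rewrite Rmult_comm. rewrite <- sumR_scal. apply sumR_ext; intros; ring. }
  assert (S3 : sumR (fun j => sumR (fun k => Ft a b c j k * X j) n) n = 1 - h a b c n).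
  { rewrite sumR_swap. unfold h. match goal with |- _ = 1 - (1 - ?S) => replace (1 - (1 - S)) with S by ring end. apply sumR_ext. intros k Hk.
    replace n with (S k + (n - S k))%nat at 1 by lia. rewrite sumR_split.
    rewrite (sumR_zero (fun i => _) (n - S k)). rewrite Rplus_0_r. apply sumR_ext; intros jj Hjj; unfold X; pose proof (hb jj); field; lra.
    intros i Hi. rewrite Ft_low by lia. ring. }
  assert (S4 : sumR (fun j => Ft a b c j (n-1) * X j) n = h a b c (n-1) - h a b c n).
  { replace n with (S (n-1)) at 3 by lia. rewrite h_S. replace (S (n-1)) with n by lia.
    assert (sumR (fun j : nat => Ft a b c j (n - 1) * X j) n = sumR (fun j : nat => Ft a b c j (n - 1) * c j / b j) n).
    { apply sumR_ext; intros jj Hjj; unfold X; pose proof (hb jj); field; lra. }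
    lra. }
  rewrite h_S. rewrite S1.
  replace (b n * (h a b c n - (sumR (fun j : nat => Ft a b c j n * X j) n + c n / b n) - h a b c n))
    with (- (b n * sumR (fun j : nat => Ft a b c j n * X j) n) - c n) by (field; lra).
  rewrite S2, S3, S4. ring. Qed.

Definition Phi a b c N := - sumR (fun j => mu a b j * c j * h a b c j) N.

Lemma mu_pos a b (hb : forall i, 0 < b i) (ha : forall i, (1 <= i)%nat -> 0 < a i) k : 0 < mu a b k.
Proof. induction k; simpl. lra. apply Rmult_lt_0_compat; auto. apply Rdiv_lt_0_compat; auto. apply ha; lia. Qed.

Lemma mu_step a b (ha : forall i, (1 <= i)%nat -> 0 < a i) k : mu a b (S k) * a (S k) = mu a b k * b k.
Proof. simpl. assert (0 < a (S k)) by (apply ha; lia). field. lra. Qed.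

Lemma phi_eq a b c (hb : forall i, 0 < b i) (ha : forall i, (1 <= i)%nat -> 0 < a i) k :
  mu a b k * b k * (h a b c (S k) - h a b c k) = Phi a b c (S k).
Proof. induction k.
  - rewrite h_S. unfold Phi. simpl. rewrite Ft_diag. rewrite h_0. pose proof (hb 0%nat). field. lra.
  - pose proof (harmonic a b c (S k) hb ltac:(lia)) as H. replace (S k - 1)%nat with k in H by lia.
    replace (mu a b (S k) * b (S k) * (h a b c (S (S k)) - h a b c (S k))) with
      (mu a b (S k) * (b (S k) * (h a b c (S (S k)) - h a b c (S k)))) by ring.
    rewrite H. unfold Phi in *. rewrite sumR_S.
    replace (mu a b (S k) * (a (S k) * (h a b c (S k) - h a b c k) - c (S k) * h a b c (S k)))
      with (mu a b (S k) * a (S k) * (h a b c (S k) - h a b c k) - mu a b (S k) * c (S k) * h a b c (S k)) by ring.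
    rewrite mu_step by auto. rewrite IHk. ring. Qed.

Lemma h_ge1 a b c (hb : forall i, 0 < b i) (ha : forall i, (1 <= i)%nat -> 0 < a i) (hc : forall i, c i <= 0) k :
  1 <= h a b c k /\ 0 <= Phi a b c k.
Proof. induction k.
  - rewrite h_0. unfold Phi. simpl. lra.
  - destruct IHk as [H1 H2].
    assert (HP : 0 <= Phi a b c (S k)).
    { unfold Phi in *. rewrite sumR_S. pose proof (mu_pos a b hb ha k). pose proof (hc k).
      assert (0 <= mu a b k * (- c k) * h a b c k).
      { apply Rmult_le_pos; [apply Rmult_le_pos|]; lra. } lra. }
    split; auto.
    pose proof (phi_eq a b c hb ha k). pose proof (mu_pos a b hb ha k). pose proof (hb k).
    assert (0 <= h a b c (S k) - h a b c k).
    { apply (Rmult_le_reg_l (mu a b k * b k)). apply Rmult_lt_0_compat; auto. lra. }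
    lra. Qed.

Lemma htrans a b c (hb : forall i, 0 < b i) (ha : forall i, (1 <= i)%nat -> 0 < a i) (hc : forall i, c i <= 0) (f : nat -> R) N :
  sumR (fun k => mu a b k * (b k * (f (S k) - f k)^2 - c k * (f k)^2)) N
  = sumR (fun k => mu a b k * b k * h a b c k * h a b c (S k) * (f (S k)/h a b c (S k) - f k / h a b c k)^2) N
    + Phi a b c N * ((f N)^2 / h a b c N).
Proof. induction N.
  - unfold Phi. simpl. field. pose proof (proj1 (h_ge1 a b c hb ha hc 0)). lra.
  - rewrite !sumR_S. rewrite IHN.
    pose proof (proj1 (h_ge1 a b c hb ha hc N)). pose proof (proj1 (h_ge1 a b c hb ha hc (S N))).
    assert (E1 : Phi a b c N = Phi a b c (S N) + mu a b N * c N * h a b c N).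
    { unfold Phi. rewrite sumR_S. ring. }
    rewrite E1. rewrite <- (phi_eq a b c hb ha N). field. lra. Qed.

Lemma ER_sup_spec (P : ER -> Prop) : (exists x, P x) -> ER_is_lub P (ER_sup P).
Proof. intros [x0 Hx0]. unfold ER_sup. apply epsilon_spec.
  destruct (classic (exists u, forall x, P x -> ER_le x (Fin u))) as [[u Hu]|Hno].
  - set (E := fun r => P (Fin r)).
    assert (HE : exists r, E r).
    { destruct x0 as [r|]. exists r; auto. specialize (Hu _ Hx0). simpl in Hu. contradiction. }
    assert (Hb : bound E). { exists u. intros r Hr. apply (Hu _ Hr). }
    destruct (completeness E Hb HE) as [l [Hl1 Hl2]].
    exists (Fin l). split.
    + intros [r|] Hr. simpl. apply Hl1. exact Hr. specialize (Hu _ Hr). simpl in Hu. contradiction.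
    + intros [v|] Hv; simpl; auto. apply Hl2. intros r Hr. apply (Hv _ Hr).
  - exists PInf. split.
    + intros [r|] _; simpl; auto.
    + intros [v|] Hv; simpl; auto. apply Hno. exists v. auto.
Qed.

Lemma R_inf_spec (P : R -> Prop) : (exists x, P x) -> (exists m, forall x, P x -> m <= x) -> R_is_glb P (R_inf P).
Proof. intros [x0 Hx0] [m Hm]. unfold R_inf. apply epsilon_spec.
  set (E := fun y => P (- y)).
  assert (HE : exists y, E y) by (exists (- x0); unfold E; rewrite Ropp_involutive; auto).
  assert (Hb : bound E). { exists (- m). intros y Hy. apply Hm in Hy. lra. }
  destruct (completeness E Hb HE) as [l [Hl1 Hl2]].
  exists (- l). split.
  - intros x Hx. assert (E (- x)) by (unfold E; rewrite Ropp_involutive; auto). apply Hl1 in H. lra.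
  - intros m' Hm'. assert (l <= - m'). { apply Hl2. intros y Hy. apply Hm' in Hy. lra. } lra.
Qed.

Definition wt a b c k := / (h a b c k * h a b c (S k) * mu a b k * b k).
Definition mt a b c j := mu a b j * (h a b c j)^2.
Definition nu a b c k := mu a b k * b k * h a b c k * h a b c (S k).


Lemma lambda_glb a b c (hb : forall i, 0 < b i) (ha : forall i, (1 <= i)%nat -> 0 < a i) (hc : forall i, c i <= 0) :
  R_is_glb (Dvalues a b c) (lambda0 a b c) /\ 0 <= lambda0 a b c.
Proof.
  assert (G : R_is_glb (Dvalues a b c) (lambda0 a b c)).
  { apply R_inf_spec.
    - exists (sumR (fun k => mu a b k * (b k * ((fun k => if Nat.eqb k 0 then 1 else 0) (S k) - (fun k => if Nat.eqb k 0 then 1 else 0) k)^2 - c k * ((fun k => if Nat.eqb k 0 then 1 else 0) k)^2)) 1).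
      exists (fun k => if Nat.eqb k 0 then 1 else 0), 1%nat. split; [|split]; auto.
      intros k Hk. destruct k. lia. reflexivity.
      simpl. ring.
    - exists 0. intros x [f [N [_ [_ ->]]]]. apply sumR_nonneg. intros k _.
      pose proof (mu_pos a b hb ha k). pose proof (hb k). pose proof (hc k).
      pose proof (pow2_ge_0 (f (S k) - f k)). pose proof (pow2_ge_0 (f k)).
      apply Rmult_le_pos. lra. assert (0 <= b k * (f (S k) - f k)^2) by (apply Rmult_le_pos; lra).
      assert (0 <= - c k * (f k)^2) by (apply Rmult_le_pos; lra). lra. }
  split; auto. apply G. intros x [f [N [_ [_ ->]]]]. apply sumR_nonneg. intros k _.
      pose proof (mu_pos a b hb ha k). pose proof (hb k). pose proof (hc k).
      pose proof (pow2_ge_0 (f (S k) - f k)). pose proof (pow2_ge_0 (f k)).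
      apply Rmult_le_pos. lra. assert (0 <= b k * (f (S k) - f k)^2) by (apply Rmult_le_pos; lra).
      assert (0 <= - c k * (f k)^2) by (apply Rmult_le_pos; lra). lra.
Qed.

Lemma basic_pos a b c (hb : forall i, 0 < b i) (ha : forall i, (1 <= i)%nat -> 0 < a i) (hc : forall i, c i <= 0) k :
  0 < mu a b k /\ 0 < b k /\ 1 <= h a b c k /\ 1 <= h a b c (S k).
Proof. repeat split; [apply mu_pos|apply hb|apply h_ge1|apply h_ge1]; auto. Qed.

Lemma wt_pos a b c (hb : forall i, 0 < b i) (ha : forall i, (1 <= i)%nat -> 0 < a i) (hc : forall i, c i <= 0) k :
  0 < wt a b c k.
Proof. destruct (basic_pos a b c hb ha hc k) as [H1 [H2 [H3 H4]]]. unfold wt.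
  apply Rinv_0_lt_compat. repeat apply Rmult_lt_0_compat; lra. Qed.

Lemma mt_pos a b c (hb : forall i, 0 < b i) (ha : forall i, (1 <= i)%nat -> 0 < a i) (hc : forall i, c i <= 0) k :
  0 < mt a b c k.
Proof. destruct (basic_pos a b c hb ha hc k) as [H1 [H2 [H3 H4]]]. unfold mt.
  apply Rmult_lt_0_compat; auto. apply pow_lt; lra. Qed.

Lemma dform a b c (hb : forall i, 0 < b i) (ha : forall i, (1 <= i)%nat -> 0 < a i) (hc : forall i, c i <= 0)
  (f : nat -> R) N : f N = 0 ->
  sumR (fun k => mu a b k * (b k * (f (S k) - f k)^2 - c k * (f k)^2)) N
  = sumR (fun k => (f k / h a b c k - f (S k) / h a b c (S k))^2 / wt a b c k) N.
Proof. intros HfN. rewrite htrans by auto. rewrite HfN.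
  replace (0 ^ 2 / h a b c N) with 0 by (simpl; field; pose proof (proj1 (h_ge1 a b c hb ha hc N)); lra).
  rewrite Rmult_0_r, Rplus_0_r. apply sumR_ext. intros k _.
  destruct (basic_pos a b c hb ha hc k) as [H1 [H2 [H3 H4]]]. unfold wt. field. repeat split; lra. Qed.

Lemma upper_part a b c (hb : forall i, 0 < b i) (ha : forall i, (1 <= i)%nat -> 0 < a i) (hc : forall i, c i <= 0)
  (delta : R) (hyp : forall n N', sumR (mt a b c) (S n) * sumR (fun j => wt a b c (n + j)) (S N') <= delta) :
  forall x, Dvalues a b c x -> 1 <= 4 * delta * x.
Proof. intros x [f [N [Hsupp [Hnorm ->]]]].
  set (g := fun k => f k / h a b c k).
  rewrite dform by (auto; apply Hsupp; lia).
  replace 1 with (sumR (fun j => mt a b c j * (g j)^2) N).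
  apply hardy.
  - intros; apply mt_pos; auto.
  - intros; apply wt_pos; auto.
  - unfold g. rewrite Hsupp by lia. unfold Rdiv; ring.
  - intros n Hn. unfold tl. replace (N - n)%nat with (S (N - n - 1)) by lia. apply hyp.
  - rewrite <- Hnorm. apply sumR_ext. intros k _. unfold mt, g.
    pose proof (proj1 (h_ge1 a b c hb ha hc k)). field. lra.
Qed.

Lemma lower_part a b c (hb : forall i, 0 < b i) (ha : forall i, (1 <= i)%nat -> 0 < a i) (hc : forall i, c i <= 0)
  (hl : 0 < lambda0 a b c) n N' :
  sumR (mt a b c) (S n) * sumR (fun j => wt a b c (n + j)) (S N') <= / lambda0 a b c.
Proof.
  set (L := (n + S N')%nat). set (w := wt a b c).
  assert (hw : forall k, 0 < w k) by (intros; apply wt_pos; auto).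
  set (T := sumR (fun j => w (n + j)%nat) (S N')).
  assert (HT : T = tl w L n) by (unfold tl, T; f_equal; unfold L; lia).
  assert (HTp : 0 < T).
  { unfold T. rewrite sumR_front. pose proof (hw (n + 0)%nat).
    assert (0 <= sumR (fun i => w (n + S i)%nat) N') by (apply sumR_nonneg; intros; left; auto). lra. }
  set (g := fun j => if Nat.leb j n then tl w L n else tl w L j).
  assert (gz : forall j, (L <= j)%nat -> g j = 0).
  { intros j Hj. unfold g. replace (Nat.leb j n) with false by (symmetry; apply Nat.leb_gt; unfold L in *; lia).
    apply tl_end; auto. }
  set (M := sumR (mt a b c) (S n)).
  assert (HM : 0 < M). { unfold M. rewrite sumR_S. pose proof (mt_pos a b c hb ha hc n).
    assert (0 <= sumR (mt a b c) n) by (apply sumR_nonneg; intros; left; apply mt_pos; auto). lra. }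
  set (Z := sumR (fun j => mt a b c j * (g j)^2) L).
  assert (HZ : M * T^2 <= Z).
  { unfold Z. replace L with (S n + N')%nat by (unfold L; lia). rewrite sumR_split.
    assert (0 <= sumR (fun i => mt a b c (S n + i) * (g (S n + i)%nat)^2) N').
    { apply sumR_nonneg. intros. apply Rmult_le_pos. left; apply mt_pos; auto. apply pow2_ge_0. }
    assert (sumR (fun j => mt a b c j * (g j)^2) (S n) = M * T^2).
    { unfold M. rewrite Rmult_comm. rewrite <- sumR_scal. apply sumR_ext. intros j Hj.
      unfold g. replace (Nat.leb j n) with true by (symmetry; apply Nat.leb_le; lia). rewrite <- HT. ring. }
    lra. }
  assert (HZp : 0 < Z). { assert (0 < M * T^2) by (apply Rmult_lt_0_compat; auto; apply pow_lt; auto). lra. }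
  assert (HD : sumR (fun k => (g k - g (S k))^2 / w k) L = T).
  { unfold L at 1. rewrite sumR_split. rewrite sumR_zero.
    - rewrite Rplus_0_l. unfold T. apply sumR_ext. intros i Hi.
      assert (E1 : g (n + i)%nat = tl w L (n + i)).
      { unfold g. destruct (Nat.leb (n + i) n) eqn:E. apply Nat.leb_le in E. f_equal. lia. auto. }
      assert (E2 : g (S (n + i)) = tl w L (S (n + i))).
      { unfold g. replace (Nat.leb (S (n + i)) n) with false by (symmetry; apply Nat.leb_gt; lia). auto. }
      rewrite E1, E2. rewrite (tl_step w L (n + i)) by (unfold L; lia).
      pose proof (hw (n + i)%nat). field. lra.
    - intros k Hk. unfold g. replace (Nat.leb k n) with true by (symmetry; apply Nat.leb_le; lia).
      replace (Nat.leb (S k) n) with true by (symmetry; apply Nat.leb_le; lia).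
      pose proof (hw k). field. lra. }
  set (f := fun k => h a b c k * g k / sqrt Z).
  assert (HsZ : 0 < sqrt Z) by (apply sqrt_lt_R0; auto).
  assert (HsZ2 : sqrt Z * sqrt Z = Z) by (apply sqrt_sqrt; lra).
  assert (Hx : Dvalues a b c (T / Z)).
  { exists f, L. split; [|split].
    - intros k Hk. unfold f. rewrite gz by auto. unfold Rdiv; ring.
    - replace 1 with (Z / Z) by (field; lra). unfold Z at 1.
      unfold Rdiv. rewrite Rmult_comm. rewrite <- sumR_scal. apply sumR_ext. intros k _.
      unfold f, mt. replace (/ Z) with (/ (sqrt Z * sqrt Z)) by (rewrite HsZ2; auto). field. lra.
    - rewrite dform by (auto; unfold f; rewrite gz by lia; unfold Rdiv; ring).
      rewrite <- HD. unfold Rdiv at 1. rewrite Rmult_comm. rewrite <- sumR_scal. apply sumR_ext. intros k _.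
      unfold f. destruct (basic_pos a b c hb ha hc k) as [H1 [H2 [H3 H4]]]. pose proof (hw k).
      replace (/ Z) with (/ (sqrt Z * sqrt Z)) by (rewrite HsZ2; auto). unfold w in *. field. repeat split; lra. }
  destruct (lambda_glb a b c hb ha hc) as [[Hg1 Hg2] _].
  assert (Hle := Hg1 _ Hx).
  set (l := lambda0 a b c) in *.
  assert (l * Z <= T). { apply (Rmult_le_compat_r Z) in Hle; [|lra]. replace (T / Z * Z) with T in Hle by (field; lra). lra. }
  assert (l * (M * T) * T <= 1 * T).
  { replace (l * (M * T) * T) with (l * (M * T^2)) by ring. apply Rle_trans with (l * Z). apply Rmult_le_compat_l; lra. lra. }
  assert (l * (M * T) <= 1) by (apply Rmult_le_reg_r with T; auto).
  apply Rmult_le_reg_l with l; auto. rewrite Rinv_r by lra. exact H1.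
Qed.

Theorem theorem2p6 (a b c : nat -> R)
  (hb : forall i : nat, 0 < b i)
  (ha : forall i : nat, (1 <= i)%nat -> 0 < a i)
  (hc : forall i : nat, c i <= 0) :
  ER_le (delta_tilde a b c) (ER_inv (lambda0 a b c)) /\
  ER_le (ER_inv (lambda0 a b c)) (ER_scale 4 (delta_tilde a b c)) /\
  (0 < lambda0 a b c <-> delta_tilde a b c <> PInf).
Proof.
  destruct (lambda_glb a b c hb ha hc) as [[Hg1 Hg2] Hl0].
  assert (DT := ER_sup_spec (fun x => exists n : nat, x = Sdelta a b c n) (ex_intro _ _ (ex_intro _ 0%nat eq_refl))).
  fold (delta_tilde a b c) in DT. destruct DT as [DT1 DT2].
  assert (TS : forall n, ER_is_lub (fun x => exists N : nat, x = Fin (sumR (fun j => wt a b c (n + j)) (S N)))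
                                    (tail_sum (fun k => / (h a b c k * h a b c (S k) * mu a b k * b k)) n)).
  { intros n. apply ER_sup_spec. eexists. exists 0%nat. reflexivity. }
  assert (HSd : forall n, Sdelta a b c n = ER_scale (sumR (mt a b c) (S n))
                 (tail_sum (fun k => / (h a b c k * h a b c (S k) * mu a b k * b k)) n)) by reflexivity.
  assert (Mpos : forall n, 0 < sumR (mt a b c) (S n)).
  { intros n. rewrite sumR_front. pose proof (mt_pos a b c hb ha hc 0).
    assert (0 <= sumR (fun i => mt a b c (S i)) n) by (apply sumR_nonneg; intros; left; apply mt_pos; auto). lra. }
  assert (PB : 0 < lambda0 a b c -> ER_le (delta_tilde a b c) (Fin (/ lambda0 a b c))).
  { intros Hl. apply DT2. intros x [n ->]. rewrite HSd.
    set (M := sumR (mt a b c) (S n)). pose proof (Mpos n) as HM. fold M in HM.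
    assert (Ht : ER_le (tail_sum (fun k => / (h a b c k * h a b c (S k) * mu a b k * b k)) n) (Fin (/ lambda0 a b c / M))).
    { apply (proj2 (TS n)). intros x [N' ->]. simpl.
      pose proof (lower_part a b c hb ha hc Hl n N') as H. fold M in H.
      apply Rmult_le_reg_l with M; auto. replace (M * (/ lambda0 a b c / M)) with (/ lambda0 a b c) by (field; lra). exact H. }
    destruct (tail_sum _ n) as [t|]; cbn [ER_le ER_scale] in *; [|contradiction].
    replace (/ lambda0 a b c) with (M * (/ lambda0 a b c / M)) by (field; lra).
    apply Rmult_le_compat_l; lra. }
  assert (PA : forall d, delta_tilde a b c = Fin d -> 0 < d /\ / (4 * d) <= lambda0 a b c).
  { intros d Hd.
    assert (hyp : forall n N', sumR (mt a b c) (S n) * sumR (fun j => wt a b c (n + j)) (S N') <= d).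
    { intros n N'. assert (H1 := DT1 (Sdelta a b c n) (ex_intro _ n eq_refl)). rewrite Hd, HSd in H1.
      assert (H2 := proj1 (TS n) _ (ex_intro _ N' eq_refl)).
      destruct (tail_sum _ n) as [t|]; cbn [ER_le ER_scale] in *; [|contradiction].
      pose proof (Mpos n). apply Rle_trans with (sumR (mt a b c) (S n) * t); auto.
      apply Rmult_le_compat_l; lra. }
    assert (dpos : 0 < d).
    { specialize (hyp 0%nat 0%nat). pose proof (Mpos 0%nat). pose proof (wt_pos a b c hb ha hc 0).
      simpl in hyp. simpl in H. assert (0 < (0 + mt a b c 0) * (0 + wt a b c 0)) by (apply Rmult_lt_0_compat; lra). lra. }
    split; auto. apply Hg2. intros x Hx. pose proof (upper_part a b c hb ha hc d hyp x Hx).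
    apply Rmult_le_reg_l with (4 * d). lra. rewrite Rinv_r by lra. lra. }
  assert (Linv : forall l, 0 < l -> ER_inv l = Fin (/ l)).
  { intros l Hl. unfold ER_inv. destruct (Req_EM_T l 0); [lra|auto]. }
  split; [|split].
  - destruct (Req_EM_T (lambda0 a b c) 0) as [E|E].
    + unfold ER_inv. rewrite E. destruct (Req_EM_T 0 0); [|lra]. destruct (delta_tilde a b c); simpl; auto.
    + rewrite Linv by lra. apply PB. lra.
  - destruct (delta_tilde a b c) as [d|] eqn:Ed.
    + destruct (PA d eq_refl) as [Hd Hle].
      assert (0 < / (4 * d)) by (apply Rinv_0_lt_compat; lra).
      rewrite Linv by lra. simpl.
      replace (4 * d) with (/ / (4 * d)) by (field; lra). apply Rinv_le_contravar; lra.
    + simpl. destruct (ER_inv _); simpl; auto.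
  - split.
    + intros Hl E. pose proof (PB Hl) as H. rewrite E in H. simpl in H. exact H.
    + intros Hne. destruct (delta_tilde a b c) as [d|] eqn:Ed; [|congruence].
      destruct (PA d eq_refl) as [Hd Hle].
      assert (0 < / (4 * d)) by (apply Rinv_0_lt_compat; lra). lra.
Qed.
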